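(* Let $\mathcal{A}$ be a probabilistic automaton with state set $Q$. Its Markov monoid is consistent with $\mathcal{A}$: for every limit-word $\mathbf{u}$ in the Markov monoid of $\mathcal{A}$ there exists a sequence of words $(u_n)_{n\in\mathbb{N}}$ which reifies $\mathbf{u}$, i.e. for all states $s,t\in Q$ the sequence $(\mathbb{P}_{\mathcal{A}}(s\xrightarrow{u_n}t))_{n}$ converges and $\mathbf{u}(s,t)=1 \iff \lim_n \mathbb{P}_{\mathcal{A}}(s\xrightarrow{u_n}t)>0$.
   Context: Fix a finite alphabet $A$. A probabilistic automaton is $\mathcal{A}=(Q,q_0,\Delta,F)$ with $Q$ finite, $q_0\in Q$, $F\subseteq Q$ and $\Delta: Q\times A\to\mathcal{D}(Q)$ ($\mathcal{D}(Q)$ the probability distributions on $Q$). For $a\in A$ let $M_a(s,t)=\Delta(s,a)(t)$, for $u=a_0\cdots a_{n-1}$ let $M_u=M_{a_0}\cdots M_{a_{n-1}}$ (identity for the empty word), and $\mathbb{P}_{\mathcal{A}}(s\xrightarrow{u}t)=M_u(s,t)$. A limit-word is a map $\mathbf{u}:Q\times Q\to\{0,1\}$ such that for every $s$ there is $t$ with $\mathbf{u}(s,t)=1$. The concatenation $\mathbf{u}\cdot\mathbf{v}$ is given by $(\mathbf{u}\cdot\mathbf{v})(s,t)=1$ iff there exists $q$ with $\mathbf{u}(s,q)=1$ and $\mathbf{v}(q,t)=1$. A limit-word $\mathbf{u}$ is idempotent if $\mathbf{u}\cdot\mathbf{u}=\mathbf{u}$; for idempotent $\mathbf{u}$, a state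 $s$ is $\mathbf{u}$-recurrent if for all $t$, $\mathbf{u}(s,t)=1$ implies $\mathbf{u}(t,s)=1$, and the iteration $\mathbf{u}^\sharp$ is defined by $\mathbf{u}^\sharp(s,t)=1$ iff $\mathbf{u}(s,t)=1$ and $t$ is $\mathbf{u}$-recurrent. For $a\in A$, the limit-word $\mathbf{a}$ is given by $\mathbf{a}(s,t)=1$ iff $\Delta(s,a)(t)>0$, and $\mathbf{1}$ is the identity limit-word ($\mathbf{1}(s,t)=1$ iff $s=t$). The Markov monoid of $\mathcal{A}$ is the smallest set of limit-words containing $\{\mathbf{a}\mid a\in A\}\cup\{\mathbf{1}\}$ and closed under concatenation and under iteration of idempotent elements. *)

(* Defs.v *)
From HB Require Import structures.
From mathcomp Require Import all_boot all_order all_algebra.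
From mathcomp Require Import all_classical all_reals all_analysis.
Set Implicit Arguments. Unset Strict Implicit. Unset Printing Implicit Defensive.
Import Order.TTheory GRing.Theory Num.Theory.
Import numFieldNormedType.Exports.
Local Open Scope classical_set_scope.
Local Open Scope ring_scope.

Record PA (R : realType) (A Q : finType) := mkPA {
  pa_init : Q;
  pa_final : {set Q};
  pa_delta : Q -> A -> Q -> R;
  pa_delta_ge0 : forall s a t, 0 <= pa_delta s a t;
  pa_delta_sum1 : forall s a, \sum_(t : Q) pa_delta s a t = 1
}.

Fixpoint prob (R : realType) (A Q : finType) (P : PA R A Q) (u : seq A)
  (s t : Q) : R :=
  match u with
  | [::] => (s == t)%:R
  | a :: u' => \sum_(q : Q) pa_delta P s a q * prob P u' q t
  end.

Definition lword (Q : finType) := {ffun Q * Q -> bool}.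

Definition is_limit_word (Q : finType) (u : lword Q) : Prop :=
  forall s, exists t, u (s, t).

Definition lw_concat (Q : finType) (u v : lword Q) : lword Q :=
  [ffun st : Q * Q => [exists q, u (st.1, q) && v (q, st.2)]].

Definition lw_idempotent (Q : finType) (u : lword Q) : Prop :=
  lw_concat u u = u.

Definition lw_recurrent (Q : finType) (u : lword Q) (s : Q) : bool :=
  [forall t, u (s, t) ==> u (t, s)].

Definition lw_iter (Q : finType) (u : lword Q) : lword Q :=
  [ffun st : Q * Q => u st && lw_recurrent u st.2].

Definition lw_letter (R : realType) (A Q : finType) (P : PA R A Q) (a : A)
  : lword Q :=
  [ffun st : Q * Q => 0 < pa_delta P st.1 a st.2].

Definition lw_one (Q : finType) : lword Q :=
  [ffun st : Q * Q => st.1 == st.2].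

Inductive markov_monoid (R : realType) (A Q : finType) (P : PA R A Q)
  : lword Q -> Prop :=
  | mm_letter a : markov_monoid P (lw_letter P a)
  | mm_one : markov_monoid P (lw_one Q)
  | mm_concat u v : markov_monoid P u -> markov_monoid P v ->
      markov_monoid P (lw_concat u v)
  | mm_iter u : markov_monoid P u -> lw_idempotent u ->
      markov_monoid P (lw_iter u).

Definition reifies (R : realType) (A Q : finType) (P : PA R A Q)
  (w : nat -> seq A) (u : lword Q) : Prop :=
  forall s t : Q, exists l : R,
    ((fun n => prob P (w n) s t) @ \oo --> l) /\ (u (s, t) <-> 0 < l).

(* Main.v *)
From HB Require Import structures.
Require Import Defs.
From mathcomp Require Import all_boot all_order all_algebra.
From mathcomp Require Import all_classical all_reals all_analysis.
From mathcomp Require Import ring lra.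
Set Implicit Arguments. Unset Strict Implicit. Unset Printing Implicit Defensive.
Import Order.TTheory GRing.Theory Num.Theory.
Import numFieldNormedType.Exports.
Local Open Scope classical_set_scope.
Local Open Scope ring_scope.

Section Prob.
Variables (R : realType) (A Q : finType) (P : PA R A Q).

Lemma sum_delta (F : Q -> R) s : \sum_q (s == q)%:R * F q = F s.
Proof.
rewrite (bigD1 s) //= eqxx mul1r big1 ?addr0 // => q /negbTE.
by rewrite eq_sym => ->; rewrite mul0r.
Qed.

Lemma prob_cat u v s t :
  prob P (u ++ v) s t = \sum_q prob P u s q * prob P v q t.
Proof.
elim: u s => [|a u IH] s /=.
  by rewrite sum_delta.
under eq_bigr do rewrite IH mulr_sumr.
rewrite exchange_big /=; apply: eq_bigr => r _.
rewrite mulr_suml; apply: eq_bigr => q _; by rewrite mulrA.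
Qed.

Lemma prob_ge0 u s t : 0 <= prob P u s t.
Proof.
elim: u s => [|a u IH] s /=; first by rewrite ler0n.
apply: sumr_ge0 => q _; apply: mulr_ge0 => //; exact: pa_delta_ge0.
Qed.

Lemma prob_sum1 u s : \sum_t prob P u s t = 1.
Proof.
elim: u s => [|a u IH] s /=.
  by rewrite (bigD1 s) //= eqxx big1 ?addr0 // => t /negbTE; rewrite eq_sym => ->.
rewrite exchange_big /= -(pa_delta_sum1 P s a); apply: eq_bigr => q _.
by rewrite -mulr_sumr IH mulr1.
Qed.

Lemma prob_le1 u s t : prob P u s t <= 1.
Proof.
rewrite -(prob_sum1 u s) (bigD1 t) //= lerDl; apply: sumr_ge0 => *; exact: prob_ge0.
Qed.

End Prob.

Lemma pos_lb (R : realType) (I : finType) (p : pred I) (f : I -> R) :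
  (forall i, p i -> 0 < f i) -> exists2 d, 0 < d & forall i, p i -> d <= f i.
Proof.
move=> fp.
suff [d d0 dP] : exists2 d, 0 < d & forall i, i \in enum I -> p i -> d <= f i.
  by exists d => // i; apply: dP; rewrite mem_enum.
elim: (enum I) => [|i s [d d0 dP]]; first by exists 1.
case pi: (p i).
  exists (Num.min d (f i)); first by rewrite lt_min d0 fp.
  move=> j; rewrite inE => /orP[/eqP -> _|js pj]; first by rewrite ge_min lexx orbT.
  by rewrite ge_min dP.
exists d => // j; rewrite inE => /orP[/eqP -> |js pj]; first by rewrite pi.
exact: dP.
Qed.

Section Good.
Variables (R : realType) (A Q : finType) (P : PA R A Q).

Definition good (u : lword Q) := exists2 d : R, 0 < d & forall e : R, 0 < e ->
  exists w : seq A, forall s t,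
    (u (s, t) -> d <= prob P w s t) /\ (~~ u (s, t) -> prob P w s t <= e).

Lemma prob1 a s t : prob P [:: a] s t = pa_delta P s a t.
Proof.
rewrite /= (bigD1 t) //= eqxx mulr1 big1 ?addr0 // => q /negbTE ->.
by rewrite mulr0.
Qed.

Lemma good_letter a : good (lw_letter P a).
Proof.
have [d d0 dP] := @pos_lb R _ (fun st : Q * Q => 0 < pa_delta P st.1 a st.2)
  (fun st => pa_delta P st.1 a st.2) (fun _ h => h).
exists d => // e e0; exists [:: a] => s t; rewrite prob1 ffunE /=; split.
  by move=> h; apply: (dP (s, t)).
rewrite -leNgt => h; apply: le_trans h (ltW e0).
Qed.

Lemma good_one : good (lw_one Q).
Proof.
exists 1 => // e e0; exists [::] => s t; rewrite ffunE /=; split.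
  by move=> ->.
by move=> /negbTE ->; exact: ltW.
Qed.

Lemma good_concat u v : good u -> good v -> good (lw_concat u v).
Proof.
move=> [d1 d1p H1] [d2 d2p H2]; exists (d1 * d2); first exact: mulr_gt0.
move=> e e0; set n : R := #|Q|%:R.
have n0 : 0 <= n by rewrite ler0n.
set e1 := e / (2 * (n + 1)).
have e1p : 0 < e1 by apply: divr_gt0 => //; apply: mulr_gt0 => //; lra.
have [w1 Hw1] := H1 _ e1p; have [w2 Hw2] := H2 _ e1p.
exists (w1 ++ w2) => s t; rewrite ffunE /= prob_cat; split.
  move=> /existsP[q /andP[uq vq]].
  rewrite (bigD1 q) //= ler_wpDr //; first by apply: sumr_ge0 => *; apply: mulr_ge0; exact: prob_ge0.
  by apply: ler_pM; [exact: ltW|exact: ltW|apply: (Hw1 s q).1|apply: (Hw2 q t).1].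
move=> /existsPn nq.
apply: (@le_trans _ _ (\sum_(q : Q) (e1 + e1))).
  apply: ler_sum => q _; move: (nq q); rewrite negb_and => /orP[nu|nv].
    apply: (@le_trans _ _ (e1 * 1)); last by rewrite mulr1 lerDl ltW.
    by apply: ler_pM; [exact: prob_ge0|exact: prob_ge0|apply: (Hw1 s q).2|exact: prob_le1].
  apply: (@le_trans _ _ (1 * e1)); last by rewrite mul1r lerDl ltW.
  by apply: ler_pM; [exact: prob_ge0|exact: prob_ge0|exact: prob_le1|apply: (Hw2 q t).2].
rewrite sumr_const -/n -mulr_natr -/n /e1.
have -> : (e / (2 * (n + 1)) + e / (2 * (n + 1))) * n = e * (n / (n + 1)).
  by field; lra.
apply: ler_piMr; [exact: ltW | rewrite ler_pdivrMr; lra].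
Qed.
End Good.

Section Comb.
Variables (Q : finType) (u : lword Q).
Hypothesis hu : lw_idempotent u.

Lemma lw_trans a b c : u (a, b) -> u (b, c) -> u (a, c).
Proof. by move=> ab bc; rewrite -hu ffunE; apply/existsP; exists b; rewrite ab bc. Qed.

Lemma rec_back r y : lw_recurrent u r -> u (r, y) -> u (y, r).
Proof. by move=> /forallP /(_ y) /implyP. Qed.

Lemma rec_closed r y : lw_recurrent u r -> u (r, y) -> lw_recurrent u y.
Proof.
move=> hr ry; apply/forallP => z; apply/implyP => yz.
by apply: lw_trans (rec_back hr (lw_trans ry yz)) ry.
Qed.

Definition lw_succ x : {set Q} := [set y | u (x, y)]%SET.

Lemma exists_rec : (forall s, exists t, u (s, t)) ->
  forall s, exists r, u (s, r) /\ lw_recurrent u r.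
Proof.
move=> hs s; have [t0 st0] := hs s.
case: (@arg_minnP _ t0 (fun t => u (s, t)) (fun t => #|lw_succ t|) st0) => t st tmin.
have key x : u (s, x) -> lw_succ x \subset lw_succ t -> lw_succ x = lw_succ t.
  move=> sx sub; apply/eqP; rewrite eqEcard sub; exact: tmin.
have [t' tt'] := hs t.
have st' : u (s, t') := lw_trans st tt'.
have e' : lw_succ t' = lw_succ t.
  apply: key => //; apply/fintype.subsetP => y; rewrite !inE => t'y.
  exact: lw_trans tt' t'y.
exists t'; split => //; apply/forallP => y; apply/implyP => t'y.
have ey : lw_succ y = lw_succ t.
  apply: key; first exact: lw_trans st' t'y.
  rewrite -e'; apply/fintype.subsetP => z; rewrite !inE => yz; exact: lw_trans t'y yz.
have : t' \in lw_succ t by rewrite inE.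
by rewrite -ey inE.
Qed.
End Comb.

Section Iter.
Variables (R : realType) (A Q : finType) (P : PA R A Q).
Variables (u : lword Q) (w : seq A) (d e : R).
Hypothesis hu : lw_idempotent u.
Hypotheses (d0 : 0 < d) (d1 : d <= 1) (e0 : 0 <= e).
Hypothesis hd : forall s t, u (s, t) -> d <= prob P w s t.
Hypothesis he : forall s t, ~~ u (s, t) -> prob P w s t <= e.
Hypothesis hsr : forall s, exists r, u (s, r) /\ lw_recurrent u r.

Fixpoint wp k := match k with 0 => w | k.+1 => wp k ++ w end.
Let M := prob P w.
Let N k := prob P (wp k).
Let n : R := #|Q|%:R.
Let n0 : 0 <= n. Proof. by rewrite ler0n. Qed.

Lemma N_S k s t : N k.+1 s t = \sum_q N k s q * M q t.
Proof. by rewrite /N /= prob_cat. Qed.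

Lemma mass_step (C : pred Q) k s :
  \sum_(q | C q) N k.+1 s q = \sum_q' N k s q' * \sum_(q | C q) M q' q.
Proof.
under eq_bigr do rewrite N_S.
rewrite exchange_big /=; apply: eq_bigr => q' _; by rewrite mulr_sumr.
Qed.

Lemma part_le1 (C : pred Q) v s : \sum_(q | C q) prob P v s q <= 1.
Proof.
rewrite -(prob_sum1 P v s) [X in _ <= X](bigID C) /= lerDl; apply: sumr_ge0 => *; exact: prob_ge0.
Qed.

Lemma part_ge0 (C : pred Q) v s : 0 <= \sum_(q | C q) prob P v s q.
Proof. apply: sumr_ge0 => *; exact: prob_ge0. Qed.

Lemma sum_small (C : pred Q) q' :
  (forall q, C q -> M q' q <= e) -> \sum_(q | C q) M q' q <= n * e.
Proof.
move=> h; apply: (@le_trans _ _ (\sum_(q | C q) e)); first exact: ler_sum.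
rewrite sumr_const mulrC -mulr_natr ler_wpM2l //; rewrite ler_nat; exact: max_card.
Qed.

Lemma compl_mass (C : pred Q) v q' :
  \sum_(q | C q) prob P v q' q = 1 - \sum_(q | ~~ C q) prob P v q' q.
Proof. rewrite -(prob_sum1 P v q') [X in _ = X - _](bigID C) /=; ring. Qed.

Lemma off_bound k s t : ~~ u (s, t) -> N k s t <= (n + 1) ^+ k.+1 * e.
Proof.
elim: k s t => [|k IH] s t nst.
  rewrite expr1 /N /=; apply: le_trans (he nst) _; rewrite ler_peMl //; have := n0; lra.
rewrite N_S; set X := (n + 1) ^+ k.+1 * e.
apply: (@le_trans _ _ (\sum_(q : Q) (X + e))).
  apply: ler_sum => q _.
  have Xe : 0 <= X by apply: mulr_ge0 => //; apply: exprn_ge0; have := n0; lra.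
  case usq: (u (s, q)).
    have nqt : ~~ u (q, t).
      by apply/negP => uqt; move/negP: nst; apply; exact: lw_trans usq uqt.
    apply: (@le_trans _ _ (1 * e)); last by rewrite mul1r lerDr.
    by apply: ler_pM; [exact: prob_ge0|exact: prob_ge0|exact: prob_le1|exact: he].
  apply: (@le_trans _ _ (X * 1)); last by rewrite mulr1 lerDl.
  apply: ler_pM; [exact: prob_ge0|exact: prob_ge0| |exact: prob_le1].
  by apply: IH; rewrite usq.
rewrite sumr_const -mulr_natr -/n /X !exprS.
have : 1 <= (n + 1) ^+ k by apply: exprn_ege1; have := n0; lra.
move: ((n + 1) ^+ k) => p p1.
have h1 : 0 <= (p - 1) * ((n + 1) * e).
  by apply: mulr_ge0; [lra | apply: mulr_ge0 => //; have := n0; lra].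
rewrite -subr_ge0.
have -> : (n + 1) * ((n + 1) * p) * e - ((n + 1) * p * e + e) * n =
  (p - 1) * ((n + 1) * e) + e by ring.
by apply: addr_ge0.
Qed.

Let Rec := lw_recurrent u.

Lemma mT_le q' : \sum_(q | ~~ Rec q) M q' q <= 1 - d.
Proof.
have [r [ur rr]] := hsr q'.
rewrite /M compl_mass lerD2l lerN2.
rewrite (bigD1 r) /=; last by rewrite negbK.
rewrite -[d]addr0; apply: lerD; first exact: hd.
by apply: sumr_ge0 => *; exact: prob_ge0.
Qed.

Lemma mT_rec q' : Rec q' -> \sum_(q | ~~ Rec q) M q' q <= n * e.
Proof.
move=> rq'; apply: sum_small => q nq; apply: he; apply/negP => uq.
by move/negP: nq; apply; exact: rec_closed rq' uq.
Qed.

Lemma massT_bound k s :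
  \sum_(q | ~~ Rec q) N k s q <= (1 - d) ^+ k.+1 + k%:R * n * e.
Proof.
elim: k s => [|k IH] s.
  by rewrite mul0r mul0r addr0 expr1; exact: mT_le.
rewrite mass_step (bigID Rec) /=.
set a := \sum_(i | Rec i) _; set b := \sum_(i | ~~ Rec i) _.
have ha : a <= n * e.
  apply: (@le_trans _ _ (\sum_(i | Rec i) N k s i * (n * e))).
    apply: ler_sum => i ri; apply: ler_wpM2l; [exact: prob_ge0 | exact: mT_rec].
  rewrite -mulr_suml; apply: ler_piMl; first by apply: mulr_ge0.
  exact: part_le1.
have hb : b <= (1 - d) * ((1 - d) ^+ k.+1 + k%:R * n * e).
  apply: (@le_trans _ _ (\sum_(i | ~~ Rec i) N k s i * (1 - d))).
    apply: ler_sum => i ri; apply: ler_wpM2l; [exact: prob_ge0 | exact: mT_le].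
  rewrite -mulr_suml mulrC; apply: ler_wpM2l; first by rewrite subr_ge0.
  exact: IH.
apply: le_trans (lerD ha hb) _.
rewrite -subr_ge0.
have -> : (1 - d) ^+ k.+2 + k.+1%:R * n * e - (n * e + (1 - d) * ((1 - d) ^+ k.+1 + k%:R * n * e))
  = d * (k%:R * n * e) by rewrite exprS -natr1; ring.
by apply: mulr_ge0; [exact: ltW | apply: mulr_ge0 => //; apply: mulr_ge0 => //; exact: ler0n].
Qed.

Lemma sum_drop (C : pred Q) (F : Q -> R) :
  (forall q, 0 <= F q) -> \sum_(q | C q) F q <= \sum_q F q.
Proof.
move=> h; rewrite [X in _ <= X](bigID C) /= lerDl; exact: sumr_ge0.
Qed.

Variable t : Q.
Hypothesis rt : Rec t.

Lemma utt : u (t, t).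
Proof. have [r [ur _]] := hsr t; exact: lw_trans ur (rec_back rt ur). Qed.

Lemma mC_ge q' : u (t, q') -> 1 - n * e <= \sum_(q | u (t, q)) M q' q.
Proof.
move=> tq'; rewrite /M compl_mass lerD2l lerN2; apply: sum_small => q nq.
apply: he; apply/negP => uq; move/negP: nq; apply; exact: lw_trans tq' uq.
Qed.

Lemma massC_bound k s : u (s, t) ->
  d - k%:R * n * e <= \sum_(q | u (t, q)) N k s q.
Proof.
move=> st; elim: k => [|k IH].
  rewrite mul0r mul0r subr0 (bigD1 t) /=; last exact: utt.
  rewrite -[d]addr0; apply: lerD; first exact: hd.
  by apply: sumr_ge0 => *; exact: prob_ge0.
rewrite mass_step.
apply: le_trans (sum_drop (fun q' => u (t, q')) _); last first.
  by move=> q; apply: mulr_ge0; [exact: prob_ge0 | exact: part_ge0].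
apply: (@le_trans _ _ (\sum_(q' | u (t, q')) N k s q' * (1 - n * e))); last first.
  apply: ler_sum => q' tq'; apply: ler_wpM2l; [exact: prob_ge0 | exact: mC_ge].
rewrite -mulr_suml; set m := \sum_(i | u (t, i)) N k s i.
have m1 : m <= 1 by exact: part_le1.
have h : 0 <= (1 - m) * (n * e) by apply: mulr_ge0; [rewrite subr_ge0 | exact: mulr_ge0].
apply: (@le_trans _ _ (m - n * e)).
  rewrite -natr1; move: IH; rewrite -/m => IH.
  have : d - k%:R * n * e - n * e <= m - n * e by rewrite lerD2r.
  apply: le_trans; rewrite le_eqVlt; apply/orP; left; apply/eqP; ring.
rewrite -subr_ge0; have -> : m * (1 - n * e) - (m - n * e) = (1 - m) * (n * e) by ring.
exact: h.
Qed.

Lemma lower k s : u (s, t) -> d * (d - k%:R * n * e) <= N k s t.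
Proof.
move=> st; case: k => [|k].
  rewrite mul0r mul0r subr0; apply: le_trans (hd st).
  by rewrite ler_piMr // ltW.
rewrite N_S.
apply: le_trans (sum_drop (fun q => u (t, q)) _); last first.
  by move=> q; apply: mulr_ge0; exact: prob_ge0.
apply: (@le_trans _ _ (\sum_(q | u (t, q)) N k s q * d)); last first.
  apply: ler_sum => q tq; apply: ler_wpM2l; [exact: prob_ge0 | ].
  by apply: hd; exact: rec_back rt tq.
rewrite -mulr_suml [X in _ <= X]mulrC; apply: ler_wpM2l; first exact: ltW.
apply: le_trans (massC_bound k st).
rewrite lerD2l lerN2 ler_wpM2r // ler_wpM2r // ler_nat.
exact: leqnSn.
Qed.
End Iter.

Lemma incr_cvg (phi : nat -> nat) : (forall n, (n <= phi n)%N) -> phi @ \oo --> \oo.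
Proof. move=> h P [N _ HP]; exists N => // n /= Nn; apply: HP; exact: leq_trans Nn (h n). Qed.
Lemma sub_cvgn (R : realType) (u : nat -> R) (phi : nat -> nat) : (forall n, (n <= phi n)%N) -> cvgn u -> cvgn (u \o phi).
Proof. move=> h cu; apply/cvg_ex; exists (limn u). exact: (cvg_comp phi u (incr_cvg h) cu). Qed.
Lemma incr_ge (phi : nat -> nat) : increasing_seq phi -> forall n, (n <= phi n)%N.
Proof. move=> /increasing_seqP h; elim=> // n IH; exact: leq_ltn_trans IH (h n). Qed.
Lemma geo_small (R : realType) (x e : R) : 0 <= x < 1 -> 0 < e -> exists k, x ^+ k <= e.
Proof.
move=> /andP[x0 x1] e0.
have : (GRing.exp x : R ^nat) @ \oo --> 0 by apply: cvg_expr; rewrite ger0_norm.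
move=> /cvgr_le /(_ _ e0) H.
near \oo => N; exists N; near: N; exact: H.
Unshelve. all: by end_near.
Qed.
Lemma bnd1 (R : realType) (g : nat -> R) : (forall n, `|g n| <= 1) -> bounded_fun g.
Proof.
move=> hb; rewrite /=/bounded_near; near=> M => n _ /=.
apply: le_trans (hb n) _; near: M; exact: nbhs_pinfty_ge.
Unshelve. all: by end_near.
Qed.

Lemma multi_bw (R : realType) (I : finType) (f : nat -> I -> R) :
  (forall n i, `|f n i| <= 1) ->
  exists phi : nat -> nat, (forall n, (n <= phi n)%N) /\
    forall i, cvgn (fun n => f (phi n) i).
Proof.
move=> hb.
suff [phi [ip H]] : exists phi : nat -> nat, increasing_seq phi /\
    forall i, i \in enum I -> cvgn (fun n => f (phi n) i).
  by exists phi; split; [exact: incr_ge ip | move=> i; apply: H; rewrite mem_enum].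
elim: (enum I) => [|i s [phi [ip H]]].
  by exists id; split => //; apply/increasing_seqP => n; exact: ltnSn.
have [psi ipsi cpsi] := bolzano_weierstrass (@bnd1 R (fun n => f (phi n) i) (fun n => hb (phi n) i)).
exists (phi \o psi); split.
  apply/increasing_seqP => n /=; move/increasing_seqP: ipsi => /(_ n) h.
  by move: h; rewrite !ltNge ip.
move=> j; rewrite inE => /orP[/eqP ->|js]; first exact: cpsi.
by have := @sub_cvgn _ (fun n => f (phi n) j) psi (@incr_ge psi ipsi) (H j js).
Qed.

Section GI.
Variables (R : realType) (A Q : finType) (P : PA R A Q).

Lemma good_iter u : lw_idempotent u -> good P u -> good P (lw_iter u).
Proof.
move=> hu [d' d'p H].
set n : R := #|Q|%:R.
have n0 : 0 <= n by rewrite ler0n.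
set d := Num.min d' 1.
have dp : 0 < d by rewrite lt_min d'p ltr01.
have d1 : d <= 1 by rewrite ge_min lexx orbT.
have H' : forall e, 0 < e -> exists w, forall s t,
    (u (s, t) -> d <= prob P w s t) /\ (~~ u (s, t) -> prob P w s t <= e).
  move=> e e0; have [w hw] := H e e0; exists w => s t; split; last exact: (hw s t).2.
  by move=> ust; apply: le_trans ((hw s t).1 ust); rewrite ge_min lexx.
have hs : forall s, exists t, u (s, t).
  move=> s; case: (boolP [exists t, u (s, t)]) => [/existsP //|/existsPn hn].
  have ep : 0 < (n + 1)^-1 by rewrite invr_gt0; lra.
  have [w hw] := H' _ ep.
  have : \sum_t prob P w s t <= n * (n + 1)^-1.
    apply: (@le_trans _ _ (\sum_(t : Q) (n + 1)^-1)).
      by apply: ler_sum => t _; apply: (hw s t).2; exact: hn.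
    by rewrite sumr_const mulrC -mulr_natr.
  rewrite prob_sum1 ler_pdivlMr; last by lra.
  lra.
have hsr := exists_rec hu hs.
exists (d * d / 2); first by apply: divr_gt0 => //; apply: mulr_gt0.
move=> e' e'p.
have [k hk] : exists k, (1 - d) ^+ k <= e' / 2.
  by apply: geo_small; [apply/andP; split; lra | lra].
set c := (n + 1) ^+ k.+1 + k%:R * n.
have c1 : (n + 1) ^+ k.+1 <= c.
  by rewrite lerDl; apply: mulr_ge0 => //; exact: ler0n.
have c2 : k%:R * n <= c.
  by rewrite lerDr; apply: exprn_ge0; lra.
have c0 : 0 <= c by apply: le_trans c2; apply: mulr_ge0 => //; exact: ler0n.
set m := Num.min e' d.
have mp : 0 < m by rewrite lt_min e'p dp.
have me' : m <= e' by rewrite ge_min lexx.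
have md : m <= d by rewrite ge_min lexx orbT.
set e := m / (2 * (c + 1)).
have ep : 0 < e by apply: divr_gt0 => //; lra.
have ce : c * e <= m / 2.
  have : e * (2 * (c + 1)) = m by rewrite /e mulfVK //; lra.
  move=> h; rewrite ler_pdivlMr; last by lra.
  rewrite -h -subr_ge0.
  have -> : e * (2 * (c + 1)) - c * e * 2 = e * 2 by ring.
  by apply: mulr_ge0; lra.
have [w hw] := H' _ ep.
have hd s t : u (s, t) -> d <= prob P w s t by move=> /(hw s t).1.
have he s t : ~~ u (s, t) -> prob P w s t <= e by move=> /(hw s t).2.
have e0 := ltW ep.
exists (wp w k) => s t; rewrite ffunE /=; split.
  move=> /andP[ust rt].
  apply: le_trans (lower hu dp d1 e0 hd he hsr rt k ust).
  have : k%:R * n * e <= d / 2.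
    apply: (@le_trans _ _ (c * e)); first by apply: ler_wpM2r.
    apply: le_trans ce _; lra.
  move=> h; rewrite -mulrA; apply: ler_wpM2l; first exact: ltW.
  lra.
rewrite negb_and => /orP[nu|nr].
  apply: le_trans (off_bound hu e0 he k nu) _.
  apply: (@le_trans _ _ (c * e)); first by apply: ler_wpM2r.
  apply: le_trans ce _; lra.
have hT := massT_bound hu dp d1 e0 hd he hsr k s.
have ht : prob P (wp w k) s t <=
    \sum_(q | ~~ lw_recurrent u q) prob P (wp w k) s q.
  rewrite (bigD1 t) //= lerDl; apply: sumr_ge0 => *; exact: prob_ge0.
apply: le_trans ht _; apply: le_trans hT _.
have h1 : (1 - d) ^+ k.+1 <= (1 - d) ^+ k.
  rewrite exprS; apply: ler_piMl; [apply: exprn_ge0 | ]; lra.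
have h2 : k%:R * #|Q|%:R * e <= e' / 2.
  apply: (@le_trans _ _ (c * e)); first by apply: ler_wpM2r.
  apply: le_trans ce _; lra.
lra.
Qed.
End GI.

Lemma good_mm (R : realType) (A Q : finType) (P : PA R A Q) u :
  markov_monoid P u -> good P u.
Proof.
elim=> [a|||v hv IH]; first exact: good_letter; first exact: good_one.
  by move=> v1 v2 _ h1 _ h2; exact: good_concat.
by move=> hi; exact: good_iter.
Qed.

Theorem theorem2p10 (R : realType) (A Q : finType) (P : PA R A Q)
  (u : lword Q) :
  markov_monoid P u -> exists w : nat -> seq A, reifies P w u.
Proof.
move=> /good_mm [d dp H].
have pos (n : nat) : 0 < (n.+1%:R : R)^-1 by rewrite invr_gt0 ltr0n.
have [W hW] := choice (fun n => H _ (pos n)).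
have hb : forall n (i : Q * Q), `|prob P (W n) i.1 i.2| <= 1.
  by move=> n i; rewrite ger0_norm ?prob_ge0 // prob_le1.
have [phi [hphi cphi]] := multi_bw hb.
exists (W \o phi) => s t.
have cst := cphi (s, t); simpl in cst.
exists (limn (fun n => prob P (W (phi n)) s t)); split; first exact: cst.
split.
  move=> ust; apply: lt_le_trans dp _; apply: limr_ge => //.
  by near=> n; exact: (hW (phi n) s t).1.
move=> lp; apply/negPn/negP => nst.
set l := limn _ in lp.
have : l <= l / 2.
  apply: limr_le => //.
  near=> n.
  apply: le_trans ((hW (phi n) s t).2 nst) _.
  apply: (@le_trans _ _ (n.+1%:R)^-1).
    rewrite lef_pV2 ?posrE ?ltr0n // ler_nat; exact: hphi.
  rewrite -[X in _ <= X]invrK lef_pV2 ?posrE ?ltr0n ?invr_gt0 ?divr_gt0 //.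
  apply: (@le_trans _ _ n%:R); last by rewrite ler_nat.
  near: n; exact: nbhs_infty_ger.
lra.
Unshelve. all: by end_near.
Qed.
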